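(* Let $G$ be a finite transitive permutation group whose point stabilizers have order $2$, and let $\mathcal{F}$ be a basic intersecting set of $G$. Then the subgroup $\langle \mathcal{F}\rangle$ generated by $\mathcal{F}$ is an elementary abelian $2$-group.
   Context: For a permutation group $G$ on a finite set $V$, a subset $\mathcal{F}\subseteq G$ is intersecting if for all $g,h\in\mathcal{F}$ there is $v\in V$ with $g(v)=h(v)$. A basic intersecting set is an intersecting set containing the identity. *)

(* Defs.v *)
From mathcomp Require Import all_boot all_fingroup all_solvable.
Set Implicit Arguments. Unset Strict Implicit. Unset Printing Implicit Defensive.
Local Open Scope group_scope.

Definition intersecting (T : finType) (F : {set {perm T}}) : Prop :=
  forall g h, g \in F -> h \in F -> exists v : T, g v = h v.

Definition basic_intersecting (T : finType) (G : {group {perm T}})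
    (F : {set {perm T}}) : Prop :=
  [/\ F \subset G, 1 \in F & intersecting F].

(* Main.v *)
Require Import Defs.
From mathcomp Require Import all_boot all_fingroup all_solvable.
Local Open Scope group_scope.

Theorem lemma3p1 (T : finType) (G : {group {perm T}}) (F : {set {perm T}}) :
  [transitive G, on [set: T] | 'P] ->
  (forall x : T, #|'C_G[x | 'P]| = 2%N) ->
  basic_intersecting G F ->
  2.-abelem <<F>>.
Proof.
move=> _ Hst [sFG F1 Hint].
have fix2 : forall a v, a \in G -> a v = v -> a ^+ 2 = 1.
  move=> a v aG av.
  have aC : a \in 'C_G[v | 'P] by rewrite inE aG; exact/astab1P.
  by rewrite -(Hst v); apply: expg_cardG.
have sq : forall g, g \in F -> g ^+ 2 = 1.
  move=> g gF; have [v Hv] := Hint g 1 gF F1.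
  by apply: (fix2 g v (subsetP sFG g gF)); rewrite Hv perm1.
have invE : forall g, g \in F -> g^-1 = g.
  move=> g gF; apply: (mulgI g); rewrite mulgV; symmetry; exact: sq.
have abF : abelian F.
  apply/centsP => g gF h hF; apply/commute_sym.
  have [v Hv] := Hint g h gF hF.
  have c2 : (g * h^-1) ^+ 2 = 1.
    apply: (fix2 _ v).
      by rewrite groupM ?groupV // (subsetP sFG).
    by rewrite permM Hv -permM mulgV perm1.
  rewrite (invE h hF) in c2.
  have : (g * h)^-1 = g * h by apply: (mulgI (g * h)); rewrite mulgV; symmetry; exact: c2.
  by rewrite invMg (invE h hF) (invE g gF) => E; rewrite /commute ?E // -E.
apply: exponent2_abelem.
rewrite abelian_exponent_gen //; apply/exponentP => x xF; exact: sq.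
Qed.
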